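(* Every lens that is both an epimorphism and a monomorphism in $\mathbf{Lens}$ is an isomorphism in $\mathbf{Lens}$.
   Context: A lens $F\colon \mathbf{A}\to\mathbf{B}$ between small categories consists of a functor $F\colon\mathbf{A}\to\mathbf{B}$ (the get functor) together with, for each object $A$ of $\mathbf{A}$, a function $\varphi_{F,A}$ from the set of morphisms of $\mathbf{B}$ with domain $FA$ to the set of morphisms of $\mathbf{A}$ with domain $A$, such that: $F(\varphi_{F,A}b)=b$; $\varphi_{F,A}(\mathrm{id}_{FA})=\mathrm{id}_A$; and $\varphi_{F,A}(b'\circ b)=\varphi_{F,A'}(b')\circ\varphi_{F,A}(b)$ whenever $b$ has domain $FA$, $A'$ is the codomain of $\varphi_{F,A}b$, and $b'$ has domain $FA'$. $\mathbf{Lens}$ is the category of small categories and lenses, with composite of $F\colon\mathbf{A}\to\mathbf{B}$, $G\colon\mathbf{B}\to\mathbf{C}$ having get functor $G\circ F$ and puts $\varphi_{G\circ F,A}(c)=\varphi_{F,A}(\varphi_{G,FA}(c))$. *)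

(* Defs.v *)
Record Category : Type := {
  Ob :> Type;
  Hom : Ob -> Ob -> Type;
  idm : forall x : Ob, Hom x x;
  comp : forall x y z : Ob, Hom y z -> Hom x y -> Hom x z;
  comp_id_l : forall x y (f : Hom x y), comp x y y (idm y) f = f;
  comp_id_r : forall x y (f : Hom x y), comp x x y f (idm x) = f;
  comp_assoc : forall x y z w (f : Hom x y) (g : Hom y z) (h : Hom z w),
      comp x z w h (comp x y z g f) = comp x y w (comp y z w h g) f
}.

Arguments Hom {_} _ _.
Arguments idm {_} _.
Arguments comp {_ _ _ _} _ _.

Record Functor (A B : Category) : Type := {
  fobj :> Ob A -> Ob B;
  fmap : forall x y : Ob A, Hom x y -> Hom (fobj x) (fobj y);
  fmap_id : forall x, fmap x x (idm x) = idm (fobj x);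
  fmap_comp : forall x y z (f : Hom x y) (g : Hom y z),
      fmap x z (comp g f) = comp (fmap y z g) (fmap x y f)
}.

Arguments fobj {_ _} _ _.
Arguments fmap {_ _} _ {_ _} _.
Arguments fmap_id {_ _} _ _.
Arguments fmap_comp {_ _} _ {_ _ _} _ _.

Definition out_arr (C : Category) (x : Ob C) : Type := {y : Ob C & Hom x y}.

(* A lens A -> B: a get functor F together with puts
   phi_A : {morphisms of B with domain F A} -> {morphisms of A with domain A}
   satisfying:
   - F (phi_A b) = b  (equality of morphisms with domain F A),
   - phi_A (id_{FA}) = id_A,
   - phi_A (b' o b) = phi_{A'} b' o phi_A b, where A' is the codomain of
     phi_A b and b' has domain F A'.  In the last law, b is written as
     F (phi_A b), which is literally equal to b by the first law; this avoids
     a type-level transport along the equation F A' = cod b. *)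
Record Lens (A B : Category) : Type := {
  lget :> Functor A B;
  lput : forall a : Ob A, out_arr B (lget a) -> out_arr A a;
  lput_get : forall a (b : out_arr B (lget a)),
      existT (fun y => Hom (lget a) y)
             (lget (projT1 (lput a b))) (fmap lget (projT2 (lput a b))) = b;
  lput_id : forall a,
      lput a (existT _ (lget a) (idm (lget a))) = existT _ a (idm a);
  lput_comp : forall a (b : out_arr B (lget a)) (z : Ob B)
      (b' : Hom (lget (projT1 (lput a b))) z),
      lput a (existT _ z (comp b' (fmap lget (projT2 (lput a b))))) =
      existT _ (projT1 (lput (projT1 (lput a b)) (existT _ z b')))
               (comp (projT2 (lput (projT1 (lput a b)) (existT _ z b')))
                     (projT2 (lput a b)))
}.

Arguments lget {_ _} _.
Arguments lput {_ _} _ _ _.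
Arguments lput_get {_ _} _ _ _.
Arguments lput_id {_ _} _ _.
Arguments lput_comp {_ _} _ _ _ _ _.

Definition functor_id (A : Category) : Functor A A.
Proof.
  refine {| fobj := fun x => x; fmap := fun x y f => f |}.
  - intros; reflexivity.
  - intros; reflexivity.
Defined.

Definition functor_comp {A B C : Category} (F : Functor A B) (G : Functor B C)
  : Functor A C.
Proof.
  refine {| fobj := fun x => G (F x);
            fmap := fun x y f => fmap G (fmap F f) |}.
  - intros x. rewrite fmap_id, fmap_id. reflexivity.
  - intros x y z f g. rewrite fmap_comp, fmap_comp. reflexivity.
Defined.

Definition lens_id (A : Category) : Lens A A.
Proof.
  refine {| lget := functor_id A; lput := fun a b => b |}.
  - intros a [y b]. reflexivity.
  - intros a. reflexivity.
  - intros a [y b] z b'. reflexivity.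
Defined.

Lemma lput_comp_gen {B C : Category} (G : Lens B C) (x : Ob B)
  (c : out_arr C (G x)) (y1 : Ob B) (h : Hom x y1)
  (H : existT (fun y => Hom x y) y1 h = lput G x c)
  (z : Ob C) (b' : Hom (G y1) z) :
  lput G x (existT _ z (comp b' (fmap (lget G) h))) =
  existT _ (projT1 (lput G y1 (existT _ z b')))
           (comp (projT2 (lput G y1 (existT _ z b'))) h).
Proof.
  pose proof (lput_comp G x c) as K.
  rewrite <- H in K. simpl in K. apply K.
Qed.

Lemma sig_eta {X : Type} {P : X -> Type} (s : {x : X & P x}) :
  existT P (projT1 s) (projT2 s) = s.
Proof. destruct s; reflexivity. Qed.

Definition lens_comp {A B C : Category} (F : Lens A B) (G : Lens B C)
  : Lens A C.
Proof.
  refine {| lget := functor_comp (lget F) (lget G);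
            lput := fun a c => lput F a (lput G (F a) c) |}.
  - intros a c. simpl.
    pose proof (lput_get F a (lput G (F a) c)) as E.
    pose proof (f_equal (fun s : out_arr B (F a) =>
       existT (fun y => Hom (G (F a)) y) (G (projT1 s)) (fmap (lget G) (projT2 s))) E)
      as E2.
    simpl in E2. rewrite E2. apply (lput_get G (F a) c).
  - intros a. simpl.
    rewrite (lput_id G (F a)). apply (lput_id F a).
  - intros a c z b'. simpl.
    rewrite (lput_comp_gen G (F a) c _ _ (lput_get F a (lput G (F a) c)) z b').
    etransitivity; [exact (lput_comp F a (lput G (F a) c) _
               (projT2 (lput G (F (projT1 (lput F a (lput G (F a) c))))
                          (existT _ z b'))))|].
    rewrite sig_eta. reflexivity.
Defined.

Definition lens_epi {A B : Category} (F : Lens A B) : Prop :=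
  forall (C : Category) (G H : Lens B C),
    lens_comp F G = lens_comp F H -> G = H.

Definition lens_mono {A B : Category} (F : Lens A B) : Prop :=
  forall (C : Category) (G H : Lens C A),
    lens_comp G F = lens_comp H F -> G = H.

Definition lens_iso {A B : Category} (F : Lens A B) : Prop :=
  exists G : Lens B A, lens_comp F G = lens_id A /\ lens_comp G F = lens_id B.

(* Main.v *)
Require Import Defs.
From Stdlib Require Import ProofIrrelevance FunctionalExtensionality ClassicalEpsilon Eqdep Bool.

Definition arr (C : Category) := {p : Ob C * Ob C & Hom (fst p) (snd p)}.
Definition mka {C : Category} {x y : Ob C} (f : Hom x y) : arr C :=
  existT (fun p : Ob C * Ob C => Hom (fst p) (snd p)) (x, y) f.
Definition oa {C : Category} {x : Ob C} (s : out_arr C x) : arr C := mka (projT2 s).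

Lemma mka_inj {C : Category} {x y : Ob C} (f g : Hom x y) : mka f = mka g -> f = g.
Proof. intro H. exact (inj_pair2 _ _ _ _ _ H). Qed.

Lemma mka_eqs {C : Category} {x y x' y' : Ob C} (f : Hom x y) (g : Hom x' y') :
  mka f = mka g -> x = x' /\ y = y'.
Proof.
  intro H. split.
  - exact (f_equal (fun r : arr C => fst (projT1 r)) H).
  - exact (f_equal (fun r : arr C => snd (projT1 r)) H).
Qed.

Lemma oa_inj {C : Category} {x : Ob C} (s t : out_arr C x) : oa s = oa t -> s = t.
Proof.
  destruct s as [y f], t as [y' g]. unfold oa; simpl. intro H.
  destruct (mka_eqs _ _ H) as [_ E]. subst y'.
  apply mka_inj in H. subst; reflexivity.
Qed.

Lemma mka_comp {C : Category} {x y z x' y' z' : Ob C} (f : Hom x y) (g : Hom y z)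
  (f' : Hom x' y') (g' : Hom y' z') :
  mka f = mka f' -> mka g = mka g' -> mka (comp g f) = mka (comp g' f').
Proof.
  intros H1 H2. destruct (mka_eqs _ _ H1) as [E1 E2]. destruct (mka_eqs _ _ H2) as [_ E3].
  subst. apply mka_inj in H1. apply mka_inj in H2. subst. reflexivity.
Qed.

Lemma mka_id {C : Category} (x y : Ob C) : x = y -> mka (idm x) = mka (idm y).
Proof. intro; subst; reflexivity. Qed.

Lemma Fmka {A B : Category} (F : Functor A B) {x y x' y' : Ob A} (f : Hom x y) (f' : Hom x' y') :
  mka f = mka f' -> mka (fmap F f) = mka (fmap F f').
Proof.
  intro H. destruct (mka_eqs _ _ H) as [E1 E2]. subst. apply mka_inj in H. subst. reflexivity.
Qed.

Definition tr {C : Category} {x x' : Ob C} (e : x = x') (s : out_arr C x) : out_arr C x' :=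
  eq_rect x (out_arr C) s x' e.

Lemma oa_tr {C : Category} {x x' : Ob C} (e : x = x') (s : out_arr C x) : oa (tr e s) = oa s.
Proof. destruct e; reflexivity. Qed.

Lemma existT_tr {C : Category} {x x' : Ob C} (c1 : out_arr C x) (c2 : out_arr C x') (e : x = x') :
  existT (out_arr C) x c1 = existT _ x' c2 -> tr e c1 = c2.
Proof. destruct e. simpl. intro H. exact (inj_pair2 _ _ _ _ _ H). Qed.

Lemma oa_existT {C : Category} {x x' : Ob C} (c1 : out_arr C x) (c2 : out_arr C x') :
  existT (out_arr C) x c1 = existT _ x' c2 -> oa c1 = oa c2.
Proof. intro H. exact (f_equal (fun r : {z : Ob C & out_arr C z} => oa (projT2 r)) H). Qed.

Definition Fout {A B : Category} (F : Functor A B) {a : Ob A} (s : out_arr A a) : out_arr B (F a) :=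
  existT _ (F (projT1 s)) (fmap F (projT2 s)).

Lemma put_get' {A B : Category} (F : Lens A B) a (b : out_arr B (F a)) : Fout F (lput F a b) = b.
Proof. exact (lput_get F a b). Qed.

Lemma put_arr {A B : Category} (F : Lens A B) (x x' : Ob A) (s : out_arr B (F x)) (s' : out_arr B (F x')) :
  x = x' -> oa s = oa s' -> oa (lput F x s) = oa (lput F x' s').
Proof. intro e. subst. intro H. apply oa_inj in H. subst. reflexivity. Qed.

Lemma lens_ext {X Y : Category} (L1 L2 : Lens X Y) :
  (forall x, L1 x = L2 x) ->
  (forall x y (f : Hom x y), mka (fmap L1 f) = mka (fmap L2 f)) ->
  (forall a c1 c2, existT (out_arr Y) (L1 a) c1 = existT _ (L2 a) c2 -> lput L1 a c1 = lput L2 a c2) ->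
  L1 = L2.
Proof.
  destruct L1 as [[o1 m1 i1 k1] p1 g1 d1 c1], L2 as [[o2 m2 i2 k2] p2 g2 d2 c2]. simpl.
  intros H1 H2 H3.
  assert (o1 = o2) by (apply functional_extensionality; exact H1). subst o2.
  assert (m1 = m2).
  { apply functional_extensionality_dep; intro x.
    apply functional_extensionality_dep; intro y.
    apply functional_extensionality_dep; intro f.
    apply mka_inj. apply H2. }
  subst m2.
  assert (i1 = i2) by apply proof_irrelevance. subst i2.
  assert (k1 = k2) by apply proof_irrelevance. subst k2.
  assert (p1 = p2).
  { apply functional_extensionality_dep; intro a.
    apply functional_extensionality_dep; intro c.
    apply H3. reflexivity. }
  subst p2.
  f_equal; apply proof_irrelevance.
Qed.

Lemma sig_pi {T : Type} (P : T -> Prop) (x y : T) (p : P x) (q : P y) :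
  x = y -> exist P x p = exist P y q.
Proof. intro; subst. f_equal. apply proof_irrelevance. Qed.

Section KP.
Context {A B : Category} (F : Lens A B).

Definition KOb := {p : Ob A * Ob A | F (fst p) = F (snd p)}.
Definition k1 (P : KOb) : Ob A := fst (proj1_sig P).
Definition k2 (P : KOb) : Ob A := snd (proj1_sig P).
Definition KHom (P Q : KOb) :=
  {uu : Hom (k1 P) (k1 Q) * Hom (k2 P) (k2 Q) | mka (fmap F (fst uu)) = mka (fmap F (snd uu))}.

Lemma kid (P : KOb) : mka (fmap F (idm (k1 P))) = mka (fmap F (idm (k2 P))).
Proof. rewrite !fmap_id. apply mka_id. exact (proj2_sig P). Qed.

Lemma kcomp (P Q R : KOb) (v : KHom Q R) (u : KHom P Q) :
  mka (fmap F (comp (fst (proj1_sig v)) (fst (proj1_sig u)))) =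
  mka (fmap F (comp (snd (proj1_sig v)) (snd (proj1_sig u)))).
Proof. rewrite !fmap_comp. apply mka_comp; [exact (proj2_sig u) | exact (proj2_sig v)]. Qed.

Definition KP : Category.
Proof.
  refine {| Ob := KOb; Hom := KHom;
            idm := fun P => exist _ (idm (k1 P), idm (k2 P)) (kid P);
            comp := fun P Q R v u => exist _ (comp (fst (proj1_sig v)) (fst (proj1_sig u)),
                                              comp (snd (proj1_sig v)) (snd (proj1_sig u)))
                                           (kcomp P Q R v u) |}.
  - intros P Q [[f1 f2] p]. apply sig_pi. simpl. rewrite !comp_id_l. reflexivity.
  - intros P Q [[f1 f2] p]. apply sig_pi. simpl. rewrite !comp_id_r. reflexivity.
  - intros P Q R S [[f1 f2] p] [[g1 g2] q] [[h1 h2] r]. apply sig_pi. simpl.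
    rewrite !comp_assoc. reflexivity.
Defined.

Definition mkout (P : KOb) (s1 : out_arr A (k1 P)) (s2 : out_arr A (k2 P))
  (pq : F (projT1 s1) = F (projT1 s2)) (pa : mka (fmap F (projT2 s1)) = mka (fmap F (projT2 s2)))
  : out_arr KP P :=
  existT (fun Q : KOb => KHom P Q) (exist _ (projT1 s1, projT1 s2) pq)
         (exist _ (projT2 s1, projT2 s2) pa).

Lemma mkout_eq (P : KOb) s1 s2 pq pa s1' s2' pq' pa' :
  s1 = s1' -> s2 = s2' -> mkout P s1 s2 pq pa = mkout P s1' s2' pq' pa'.
Proof.
  intros; subst. unfold mkout. 
  assert (pq = pq') by apply proof_irrelevance. subst pq'.
  assert (pa = pa') by apply proof_irrelevance. subst pa'. reflexivity.
Qed.

Lemma pq_of_pa {x y x' y' : Ob A} (f : Hom x y) (g : Hom x' y') :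
  mka (fmap F f) = mka (fmap F g) -> F y = F y'.
Proof. intro H. exact (proj2 (mka_eqs _ _ H)). Qed.

Lemma put_tr_arr (a1 a2 : Ob A) (e : F a1 = F a2) (s : out_arr A a1) :
  mka (fmap F (projT2 s)) = mka (fmap F (projT2 (lput F a2 (tr e (Fout F s))))).
Proof.
  pose proof (put_get' F a2 (tr e (Fout F s))) as H.
  apply (f_equal oa) in H. rewrite oa_tr in H. unfold oa, Fout in H; simpl in H.
  symmetry; exact H.
Qed.

Definition c1of (P : KOb) (s : out_arr A (k1 P)) : out_arr A (k2 P) :=
  lput F (k2 P) (tr (proj2_sig P) (Fout F s)).

Definition put1 (P : KOb) (s : out_arr A (k1 P)) : out_arr KP P :=
  mkout P s (c1of P s) (pq_of_pa _ _ (put_tr_arr _ _ (proj2_sig P) s))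
        (put_tr_arr _ _ (proj2_sig P) s).

Definition c2of (P : KOb) (s : out_arr A (k2 P)) : out_arr A (k1 P) :=
  lput F (k1 P) (tr (eq_sym (proj2_sig P)) (Fout F s)).

Definition put2 (P : KOb) (s : out_arr A (k2 P)) : out_arr KP P :=
  mkout P (c2of P s) s
        (eq_sym (pq_of_pa _ _ (put_tr_arr _ _ (eq_sym (proj2_sig P)) s)))
        (eq_sym (put_tr_arr _ _ (eq_sym (proj2_sig P)) s)).

Definition pi1F : Functor KP A.
Proof.
  refine {| fobj := fun P : Ob KP => k1 P; fmap := fun (P Q : Ob KP) (u : Hom P Q) => fst (proj1_sig u) |};
  reflexivity.
Defined.

Definition pi2F : Functor KP A.
Proof.
  refine {| fobj := fun P : Ob KP => k2 P; fmap := fun (P Q : Ob KP) (u : Hom P Q) => snd (proj1_sig u) |};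
  reflexivity.
Defined.

Lemma tr_id {C : Category} (x x' : Ob C) (e : x = x') :
  tr e (existT _ x (idm x)) = existT _ x' (idm x').
Proof. destruct e; reflexivity. Qed.

End KP.

Section KP2.
Context {A B : Category} (F : Lens A B).

Definition o1 {P : Ob (KP F)} (X : out_arr (KP F) P) : out_arr A (k1 F P) :=
  existT _ (k1 F (projT1 X)) (fst (proj1_sig (projT2 X))).
Definition o2 {P : Ob (KP F)} (X : out_arr (KP F) P) : out_arr A (k2 F P) :=
  existT _ (k2 F (projT1 X)) (snd (proj1_sig (projT2 X))).

Lemma out_KP_eq {P : Ob (KP F)} (X Y : out_arr (KP F) P) : o1 X = o1 Y -> o2 X = o2 Y -> X = Y.
Proof.
  destruct X as [[[x1 x2] px] [[u1 u2] pu]], Y as [[[y1 y2] py] [[v1 v2] pv]].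
  unfold o1, o2, k1, k2; simpl. intros H1 H2.
  assert (x1 = y1) by exact (f_equal (@projT1 _ _) H1). subst y1.
  assert (x2 = y2) by exact (f_equal (@projT1 _ _) H2). subst y2.
  apply inj_pair2 in H1. apply inj_pair2 in H2. subst.
  assert (px = py) by apply proof_irrelevance. subst.
  assert (pu = pv) by apply proof_irrelevance. subst. reflexivity.
Qed.

Lemma c1of_comp (P : Ob (KP F)) (s : out_arr A (k1 F P)) (Q : Ob (KP F)) (w : Hom P Q)
  (Hw : existT _ Q w = put1 F P s) (z : Ob A) (u' : Hom (k1 F Q) z) :
  c1of F P (existT _ z (comp u' (fst (proj1_sig w)))) =
  existT _ (projT1 (c1of F Q (existT _ z u')))
           (comp (projT2 (c1of F Q (existT _ z u'))) (snd (proj1_sig w))).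
Proof.
  change (c1of F Q (existT _ z u')) with (lput F (k2 F Q) (tr (proj2_sig Q) (Fout F (existT _ z u')))).
  assert (HX : mka (fmap F u') = mka (projT2 (tr (proj2_sig Q) (Fout F (existT _ z u'))))).
  { symmetry. exact (oa_tr (proj2_sig Q) (Fout F (existT _ z u'))). }
  revert HX.
  generalize (tr (proj2_sig Q) (Fout F (existT _ z u'))) as X.
  intros X HX.
  destruct P as [[a1 a2] e]. destruct s as [y u].
  unfold put1, mkout in Hw. simpl in Hw.
  pose proof (f_equal (@projT1 _ _) Hw) as HQ. simpl in HQ. subst Q.
  apply inj_pair2 in Hw. subst w. simpl.
  set (c := c1of F (exist _ (a1, a2) e) (existT _ y u)) in *.
  pose proof (lput_comp_gen F a2 (tr e (Fout F (existT _ y u))) (projT1 c) (projT2 c)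
               (sig_eta c) (projT1 X) (projT2 X)) as K.
  rewrite sig_eta in K. unfold c1of at 1. 
  etransitivity; [| exact K]. f_equal.
  apply oa_inj. rewrite oa_tr. unfold oa, Fout; simpl.
  rewrite fmap_comp. apply mka_comp.
  - apply (put_tr_arr F a1 a2 e (existT _ y u)).
  - exact HX.
Qed.

End KP2.

Section KP3.
Context {A B : Category} (F : Lens A B).

Definition pi1 : Lens (KP F) A.
Proof.
  refine {| lget := pi1F F; lput := put1 F |}.
  - intros P [y u]. reflexivity.
  - intros P. apply out_KP_eq.
    + reflexivity.
    + destruct P as [[a1 a2] e]. unfold o2; simpl.
      unfold c1of, Fout, k1, k2; simpl. rewrite fmap_id. rewrite tr_id. rewrite lput_id. reflexivity.
  - intros P s z u'. apply out_KP_eq.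
    + reflexivity.
    + transitivity (c1of F P (existT _ z (comp u' (fst (proj1_sig (projT2 (put1 F P s))))))).
      * apply sig_eta.
      * rewrite (c1of_comp F P s _ _ (sig_eta _)). reflexivity.
Defined.

End KP3.

Section KP4.
Context {A B : Category} (F : Lens A B).

Lemma c2of_comp (P : Ob (KP F)) (s : out_arr A (k2 F P)) (Q : Ob (KP F)) (w : Hom P Q)
  (Hw : existT _ Q w = put2 F P s) (z : Ob A) (u' : Hom (k2 F Q) z) :
  c2of F P (existT _ z (comp u' (snd (proj1_sig w)))) =
  existT _ (projT1 (c2of F Q (existT _ z u')))
           (comp (projT2 (c2of F Q (existT _ z u'))) (fst (proj1_sig w))).
Proof.
  change (c2of F Q (existT _ z u')) with (lput F (k1 F Q) (tr (eq_sym (proj2_sig Q)) (Fout F (existT _ z u')))).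
  assert (HX : mka (fmap F u') = mka (projT2 (tr (eq_sym (proj2_sig Q)) (Fout F (existT _ z u'))))).
  { symmetry. exact (oa_tr (eq_sym (proj2_sig Q)) (Fout F (existT _ z u'))). }
  revert HX.
  generalize (tr (eq_sym (proj2_sig Q)) (Fout F (existT _ z u'))) as X.
  intros X HX.
  destruct P as [[a1 a2] e]. destruct s as [y u].
  unfold put2, mkout in Hw. simpl in Hw.
  pose proof (f_equal (@projT1 _ _) Hw) as HQ. simpl in HQ. subst Q.
  apply inj_pair2 in Hw. subst w. simpl.
  set (c := c2of F (exist _ (a1, a2) e) (existT _ y u)) in *.
  pose proof (lput_comp_gen F a1 (tr (eq_sym e) (Fout F (existT _ y u))) (projT1 c) (projT2 c)
               (sig_eta c) (projT1 X) (projT2 X)) as K.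
  rewrite sig_eta in K. unfold c2of at 1.
  etransitivity; [| exact K]. f_equal.
  apply oa_inj. rewrite oa_tr. unfold oa, Fout; simpl.
  rewrite fmap_comp. apply mka_comp.
  - apply (put_tr_arr F a2 a1 (eq_sym e) (existT _ y u)).
  - exact HX.
Qed.

Definition pi2 : Lens (KP F) A.
Proof.
  refine {| lget := pi2F F; lput := put2 F |}.
  - intros P [y u]. reflexivity.
  - intros P. apply out_KP_eq.
    + destruct P as [[a1 a2] e]. unfold o1; simpl.
      unfold c2of, Fout, k1, k2; simpl. rewrite fmap_id. rewrite tr_id. rewrite lput_id. reflexivity.
    + reflexivity.
  - intros P s z u'. apply out_KP_eq.
    + transitivity (c2of F P (existT _ z (comp u' (snd (proj1_sig (projT2 (put2 F P s))))))).
      * apply sig_eta.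
      * rewrite (c2of_comp P s _ _ (sig_eta _)). reflexivity.
    + reflexivity.
Defined.

End KP4.

Section KP5.
Context {A B : Category} (F : Lens A B).

Lemma pi_eq : lens_comp (pi1 F) F = lens_comp (pi2 F) F.
Proof.
  apply lens_ext.
  - intros x. exact (proj2_sig x).
  - intros x y f. exact (proj2_sig f).
  - intros P c1 c2 H. simpl in *. apply out_KP_eq.
    + transitivity (lput F (k1 F P) c1). { apply sig_eta. }
      transitivity (c2of F P (lput F (k2 F P) c2)). 2:{ symmetry; apply sig_eta. }
      unfold c2of. rewrite put_get'.
      rewrite <- (existT_tr c2 c1 (eq_sym (proj2_sig P)) (eq_sym H)). reflexivity.
    + transitivity (lput F (k2 F P) c2). 2:{ symmetry; apply sig_eta. }
      transitivity (c1of F P (lput F (k1 F P) c1)). { apply sig_eta. }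
      unfold c1of. rewrite put_get'.
      rewrite <- (existT_tr c1 c2 (proj2_sig P) H). reflexivity.
Qed.

Lemma mono_inj : lens_mono F -> forall a1 a2 : Ob A, F a1 = F a2 -> a1 = a2.
Proof.
  intros M a1 a2 e.
  pose proof (M _ _ _ pi_eq) as E.
  exact (f_equal (fun L : Lens (KP F) A => fobj L (exist _ (a1, a2) e : Ob (KP F))) E).
Qed.

Lemma mono_psur : lens_mono F -> forall (a : Ob A) (s : out_arr A a), lput F a (Fout F s) = s.
Proof.
  intros M a s.
  pose proof (M _ _ _ pi_eq) as E.
  set (c := lput F a (Fout F s)).
  assert (pa : mka (fmap F (projT2 s)) = mka (fmap F (projT2 c))).
  { pose proof (put_get' F a (Fout F s)) as H. apply (f_equal oa) in H. symmetry; exact H. }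
  pose (P := exist _ (a, a) eq_refl : Ob (KP F)).
  pose (Q := exist _ (projT1 s, projT1 c) (pq_of_pa F _ _ pa) : Ob (KP F)).
  pose (w := exist _ (projT2 s, projT2 c) pa : Hom P Q).
  pose proof (f_equal (fun L : Lens (KP F) A => mka (fmap L w)) E) as H.
  simpl in H. apply oa_inj in H. symmetry. exact H.
Qed.

End KP5.

Section Epi.
Context {A B : Category} (F : Lens A B).

Definition Sb (b : Ob B) : bool :=
  if excluded_middle_informative (exists a, F a = b) then true else false.

Lemma Sb_true b : Sb b = true -> exists a, F a = b.
Proof. unfold Sb. destruct (excluded_middle_informative _); [auto | discriminate]. Qed.

Lemma Sb_F a : Sb (F a) = true.
Proof. unfold Sb. destruct (excluded_middle_informative _) as [_|n]; [reflexivity|]. exfalso; apply n; eauto. Qed.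

Lemma Sb_fwd b b' (β : Hom b b') : Sb b = true -> Sb b' = true.
Proof.
  intro H. apply Sb_true in H. destruct H as [a Ha]. subst b.
  pose proof (f_equal (@projT1 _ _) (put_get' F a (existT _ b' β))) as E. simpl in E.
  rewrite <- E. apply Sb_F.
Qed.

Definition flag (b : Ob B) (s : bool) (b' : Ob B) : bool :=
  if Sb b then s else andb s (negb (Sb b')).

Lemma flag_id b s : flag b s b = s.
Proof. unfold flag. destruct (Sb b); destruct s; reflexivity. Qed.

Lemma flag_comp b b' b'' s (β : Hom b b') (γ : Hom b' b'') :
  flag b' (flag b s b') b'' = flag b s b''.
Proof.
  unfold flag.
  destruct (Sb b) eqn:E1.
  - rewrite (Sb_fwd _ _ β E1). reflexivity.
  - destruct (Sb b') eqn:E2.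
    + rewrite (Sb_fwd _ _ γ E2). destruct s; reflexivity.
    + destruct s; reflexivity.
Qed.

Definition DHom (x y : Ob B * bool) :=
  {β : Hom (fst x) (fst y) | snd y = flag (fst x) (snd x) (fst y)}.

Lemma dcomp_pf (x y z : Ob B * bool) (v : DHom y z) (u : DHom x y) :
  snd z = flag (fst x) (snd x) (fst z).
Proof.
  destruct v as [γ q], u as [β p]. rewrite q, p. apply (flag_comp _ _ _ _ β γ).
Qed.

Definition D : Category.
Proof.
  refine {| Ob := Ob B * bool; Hom := DHom;
            idm := fun x => exist _ (idm (fst x)) (eq_sym (flag_id _ _));
            comp := fun x y z v u => exist _ (comp (proj1_sig v) (proj1_sig u)) (dcomp_pf x y z v u) |}.
  - intros x y [f p]. apply sig_pi. simpl. apply comp_id_l.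
  - intros x y [f p]. apply sig_pi. simpl. apply comp_id_r.
  - intros x y z w [f p] [g q] [h r]. apply sig_pi. simpl. apply comp_assoc.
Defined.

Definition gob (t : bool) (b : Ob B) : Ob D := (b, andb t (negb (Sb b))).

Lemma gflag t b b' (β : Hom b b') :
  andb t (negb (Sb b')) = flag b (andb t (negb (Sb b))) b'.
Proof.
  unfold flag. destruct (Sb b) eqn:E.
  - rewrite (Sb_fwd _ _ β E). destruct t; reflexivity.
  - destruct t; reflexivity.
Qed.

Definition GF (t : bool) : Functor B D.
Proof.
  refine {| fobj := gob t; fmap := fun b b' (β : Hom b b') => (exist _ β (gflag t b b' β) : Hom (gob t b) (gob t b')) |}.
  - intros x. apply sig_pi. reflexivity.
  - intros x y z f g. apply sig_pi. reflexivity.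
Defined.

Lemma Dout_eq (x : Ob D) (b' : Ob B) (s1 s2 : bool) (β : Hom (fst x) b') p1 p2 :
  s1 = s2 -> existT (fun y : Ob D => Hom x y) (b', s1) (exist _ β p1) = existT _ (b', s2) (exist _ β p2).
Proof. intro; subst. f_equal. apply sig_pi. reflexivity. Qed.

Definition GL (t : bool) : Lens B D.
Proof.
  refine {| lget := GF t;
            lput := fun b (c : out_arr D (gob t b)) => existT _ (fst (projT1 c)) (proj1_sig (projT2 c)) |}.
  - intros b [[b' s'] [β p]]. simpl in *. apply Dout_eq. rewrite p. apply gflag. exact β.
  - intros b. reflexivity.
  - intros b [[b' s'] [β p]] z [γ q]. reflexivity.
Defined.

Lemma Dmka_eq (b b' : Ob B) (s1 s1' s2 s2' : bool) (β : Hom b b') p1 p2 :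
  s1 = s2 -> s1' = s2' ->
  @mka D (b, s1) (b', s1') (exist _ β p1) = @mka D (b, s2) (b', s2') (exist _ β p2).
Proof. intros; subst. f_equal. apply sig_pi. reflexivity. Qed.

Lemma G_eq : lens_comp F (GL true) = lens_comp F (GL false).
Proof.
  apply lens_ext.
  - intros x. simpl. unfold gob. rewrite Sb_F. reflexivity.
  - intros x y f. simpl. apply Dmka_eq; rewrite Sb_F; reflexivity.
  - intros a c1 c2 H. simpl. f_equal.
    pose proof (f_equal (fun r : {z : Ob D & out_arr D z} =>
       existT (out_arr B) (fst (projT1 r))
         (existT _ (fst (projT1 (projT2 r))) (proj1_sig (projT2 (projT2 r))))) H) as H2.
    simpl in H2. exact (inj_pair2 _ _ _ _ _ H2).
Qed.

Lemma epi_sur : lens_epi F -> forall b : Ob B, exists a, F a = b.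
Proof.
  intros Ep b. pose proof (Ep _ _ _ G_eq) as E.
  pose proof (f_equal (fun L : Lens B D => snd (fobj L b)) E) as E2. simpl in E2.
  apply Sb_true. destruct (Sb b); [reflexivity | discriminate].
Qed.

End Epi.

Definition castcod {C : Category} {x y y' : Ob C} (e : y = y') (f : Hom x y) : Hom x y' :=
  eq_rect y (Hom x) f y' e.

Lemma mka_castcod {C : Category} {x y y' : Ob C} (e : y = y') (f : Hom x y) : mka (castcod e f) = mka f.
Proof. destruct e; reflexivity. Qed.

Lemma projT1_tr {C : Category} {x x' : Ob C} (e : x = x') (s : out_arr C x) : projT1 (tr e s) = projT1 s.
Proof. destruct e; reflexivity. Qed.

Lemma tr_sym_tr {C : Category} {x x' : Ob C} (e : x = x') (s : out_arr C x) : tr (eq_sym e) (tr e s) = s.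
Proof. destruct e; reflexivity. Qed.

Lemma tr_id' {C : Category} (x x' : Ob C) (e : x = x') :
  tr e (existT _ x (idm x)) = existT _ x' (idm x').
Proof. destruct e; reflexivity. Qed.

Section Inv.
Context {A B : Category} (F : Lens A B)
  (inj : forall a1 a2, F a1 = F a2 -> a1 = a2)
  (sur : forall b, exists a, F a = b)
  (psur : forall a (s : out_arr A a), lput F a (Fout F s) = s).

Definition g (b : Ob B) : Ob A := proj1_sig (constructive_indefinite_description _ (sur b)).
Definition eg (b : Ob B) : F (g b) = b := proj2_sig (constructive_indefinite_description _ (sur b)).

Definition kc {b b' : Ob B} (β : Hom b b') : out_arr A (g b) :=
  lput F (g b) (tr (eq_sym (eg b)) (existT _ b' β)).

Lemma kc_F {b b' : Ob B} (β : Hom b b') : F (projT1 (kc β)) = b'.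
Proof.
  pose proof (f_equal (@projT1 _ _) (put_get' F (g b) (tr (eq_sym (eg b)) (existT _ b' β)))) as E.
  simpl in E. rewrite projT1_tr in E. exact E.
Qed.

Lemma kc_cod {b b' : Ob B} (β : Hom b b') : projT1 (kc β) = g b'.
Proof. apply inj. rewrite kc_F, eg. reflexivity. Qed.

Definition Kmap {b b' : Ob B} (β : Hom b b') : Hom (g b) (g b') := castcod (kc_cod β) (projT2 (kc β)).

Lemma Kmap_arr {b b' : Ob B} (β : Hom b b') : mka (Kmap β) = oa (kc β).
Proof. unfold Kmap. rewrite mka_castcod. reflexivity. Qed.

Lemma kc_Fmka {b b' : Ob B} (β : Hom b b') : mka (fmap F (projT2 (kc β))) = mka β.
Proof.
  pose proof (f_equal oa (put_get' F (g b) (tr (eq_sym (eg b)) (existT _ b' β)))) as E.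
  rewrite oa_tr in E. exact E.
Qed.

Definition KF : Functor B A.
Proof.
  refine {| fobj := g; fmap := fun b b' β => Kmap β |}.
  - intros b. apply mka_inj. rewrite Kmap_arr. unfold kc. rewrite tr_id'. rewrite lput_id. reflexivity.
  - intros x y z f h. apply mka_inj. rewrite Kmap_arr.
    set (c := kc f).
    pose (X := tr (eq_sym (kc_F f)) (existT _ z h)).
    pose proof (lput_comp_gen F (g x) (tr (eq_sym (eg x)) (existT _ y f)) (projT1 c) (projT2 c)
                 (sig_eta c) (projT1 X) (projT2 X)) as K.
    rewrite sig_eta in K.
    assert (E : tr (eq_sym (eg x)) (existT _ z (comp h f)) =
                existT _ (projT1 X) (comp (projT2 X) (fmap F (projT2 c)))).
    { apply oa_inj. rewrite oa_tr. unfold oa; simpl. apply mka_comp.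
      - symmetry. apply kc_Fmka.
      - change (mka (projT2 X)) with (oa X). unfold X. rewrite oa_tr. reflexivity. }
    unfold kc at 1. rewrite E.
    transitivity (oa (existT _ (projT1 (lput F (projT1 c) X)) (comp (projT2 (lput F (projT1 c) X)) (projT2 c)))). { f_equal. exact K. }
    unfold oa; simpl.
    apply mka_comp.
    + rewrite Kmap_arr. reflexivity.
    + change (mka (projT2 (lput F (projT1 c) X)) = mka (Kmap h)).
      rewrite Kmap_arr. unfold kc. apply put_arr.
      * apply kc_cod.
      * unfold X. rewrite !oa_tr. reflexivity.
Defined.

Definition Kput (b : Ob B) (s : out_arr A (g b)) : out_arr B b := tr (eg b) (Fout F s).

Lemma Kmap_Kput (b : Ob B) (s : out_arr A (g b)) : mka (Kmap (projT2 (Kput b s))) = oa s.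
Proof.
  rewrite Kmap_arr. unfold kc. rewrite sig_eta. unfold Kput. rewrite tr_sym_tr. rewrite psur. reflexivity.
Qed.

Definition K : Lens B A.
Proof.
  refine {| lget := KF; lput := Kput |}.
  - intros b s. apply oa_inj. simpl. exact (Kmap_Kput b s).
  - intros b. unfold Kput, Fout. simpl. rewrite fmap_id. apply tr_id'.
  - intros b s z u'. apply oa_inj. unfold Kput at 1. rewrite oa_tr. unfold oa, Fout; simpl.
    rewrite fmap_comp. apply mka_comp.
    + pose proof (Fmka F _ (projT2 s) (Kmap_Kput b s)) as E. rewrite E.
      change (oa (Fout F s) = oa (Kput b s)). unfold Kput. rewrite oa_tr. reflexivity.
    + change (oa (Fout F (existT _ z u')) = oa (Kput (projT1 (Kput b s)) (existT _ z u'))).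
      unfold Kput. rewrite oa_tr. reflexivity.
Defined.

Lemma FK_id : lens_comp F K = lens_id A.
Proof.
  apply lens_ext.
  - intros a. simpl. apply inj. apply eg.
  - intros x y f. simpl. rewrite Kmap_arr. unfold kc.
    rewrite (put_arr F (g (F x)) x _ (Fout F (existT _ y f))).
    + rewrite psur. reflexivity.
    + apply inj. apply eg.
    + rewrite oa_tr. reflexivity.
  - intros a c c2 H. simpl in *. apply oa_inj.
    rewrite (put_arr F a (g (F a)) _ (Fout F c)).
    + rewrite psur. exact (oa_existT _ _ H).
    + symmetry. apply inj. apply eg.
    + unfold Kput. rewrite oa_tr. reflexivity.
Qed.

Lemma KF_id : lens_comp K F = lens_id B.
Proof.
  apply lens_ext.
  - intros b. simpl. apply eg.
  - intros x y f. simpl. rewrite (Fmka F _ _ (Kmap_arr f)). apply kc_Fmka.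
  - intros b c c2 H. simpl in *. apply oa_inj.
    unfold Kput. rewrite oa_tr. rewrite put_get'. exact (oa_existT _ _ H).
Qed.

End Inv.

Theorem corollary5p9 (A B : Category) (F : Lens A B) :
  lens_epi F -> lens_mono F -> lens_iso F.
Proof.
  intros Ep M.
  exists (K F (mono_inj F M) (epi_sur F Ep) (mono_psur F M)).
  split; [apply FK_id | apply KF_id].
Qed.
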